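(* Let $(E\to M,\rho,\langle\cdot,\cdot\rangle,\circ)$ be a Courant algebroid and $(\mathbf I,\mathbf J,\mathbf K)$ an almost hypercomplex structure on $E$. There exists at most one hypercomplex connection $\nabla$ satisfying $\nabla\mathbf I=\nabla\mathbf J=\nabla\mathbf K=0$ and, for all $X,Y\in\Gamma(E)$, $$T(X,Y)=\mathbf ID\langle X,\mathbf IY\rangle+\mathbf JD\langle X,\mathbf JY\rangle+\mathbf KD\langle X,\mathbf KY\rangle.$$
   Context: A Courant algebroid $(E\to M,\rho,\langle\cdot,\cdot\rangle,\circ)$ consists of a real vector bundle $E\to M$ over a smooth manifold, a nondegenerate symmetric fiberwise bilinear pairing $\langle\cdot,\cdot\rangle$ on $E$, a vector bundle map $\rho:E\to TM$ (the anchor), and an $\mathbb R$-bilinear operation $\circ$ on $\Gamma(E)$ (the Dorfman bracket) such that for all $f\in C^\infty(M)$, $x,y,z\in\Gamma(E)$: $x\circ(y\circ z)=(x\circ y)\circ z+y\circ(x\circ z)$; $\rho(x\circ y)=[\rho(x),\rho(y)]$; $x\circ(fy)=(\rho(x)f)y+f(x\circ y)$; $x\circ y+y\circ x=2D\langle x,y\rangle$; $(Df)\circ x=0$; $\rho(x)\langle y,z\rangle=\langle x\circ y,z\rangle+\langle y,x\circ z\rangle$. Here $D:C^\infty(M)\to\Gamma(E)$ is the $\mathbb R$-linear map defined by $\langle Df,x\rangle=\tfrac12\rho(x)f$. The Courant bracket is $[\![x,y]\!]=\tfrac12(x\circ y-y\circ x)$. An almost hypercomplex structure on $E$ is a triple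 $(\mathbf I,\mathbf J,\mathbf K)$ of vector bundle endomorphisms of $E$ over $\mathrm{id}_M$, each orthogonal for $\langle\cdot,\cdot\rangle$, with $\mathbf I^2=\mathbf J^2=\mathbf K^2=\mathbf I\mathbf J\mathbf K=-1$. Given an almost hypercomplex structure, for $f\in C^\infty(M)$ and $X,Y\in\Gamma(E)$ set $\Delta_f(X,Y)=\langle X,Y\rangle Df+\langle\mathbf IX,Y\rangle\mathbf I Df+\langle\mathbf JX,Y\rangle\mathbf JDf+\langle\mathbf KX,Y\rangle\mathbf KDf$. A hypercomplex connection is an $\mathbb R$-bilinear map $\Gamma(E)\times\Gamma(E)\to\Gamma(E)$, $(X,Y)\mapsto\nabla_XY$, with $\nabla_{fX}Y=f\nabla_XY$ and $\nabla_X(fY)=(\rho(X)f)Y+f\nabla_XY-\Delta_f(X,Y)$. Its torsion is $T(X,Y)=\nabla_XY-\nabla_YX-[\![X,Y]\!]$. For an endomorphism $P$ of $E$, $(\nabla_XP)Y:=\nabla_X(PY)-P(\nabla_XY)$, and $\nabla P=0$ means this vanishes for all $X,Y$. *)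

(* Defs.v *)
(* Algebraic (section-level) model of a Courant algebroid:
   R plays the role of the reals, A of C^oo(M) (a commutative R-algebra),
   V of Gamma(E) (an A-module). *)
From HB Require Import structures.
From mathcomp Require Import all_boot all_order all_algebra.
Set Implicit Arguments. Unset Strict Implicit. Unset Printing Implicit Defensive.
Import Order.TTheory GRing.Theory Num.Theory.
Local Open Scope ring_scope.

Section Courant.
Variables (R : realFieldType) (A : comAlgType R) (V : lmodType A).

Definition half : A := (2%:R : R)^-1%:A.

(* vector field = R-linear derivation of A *)
Definition is_vector_field (d : A -> A) : Prop :=
  [/\ forall a b, d (a + b) = d a + d b,
      forall (r : R) a, d (r%:A * a) = r%:A * d a
    & forall a b, d (a * b) = d a * b + a * d b].

Definition R_bilinear (op : V -> V -> V) : Prop :=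
  [/\ forall x y z, op (x + y) z = op x z + op y z,
      forall x y z, op x (y + z) = op x y + op x z,
      forall (r : R) x y, op (r%:A *: x) y = r%:A *: op x y
    & forall (r : R) x y, op x (r%:A *: y) = r%:A *: op x y].

Definition courant_bracket (dorf : V -> V -> V) (x y : V) : V :=
  half *: (dorf x y - dorf y x).

Definition courant_algebroid (rho : V -> A -> A) (pair : V -> V -> A)
    (dorf : V -> V -> V) (D : A -> V) : Prop :=
  [/\
      [/\ (forall x y, pair x y = pair y x),
          (forall f x y z, pair (f *: x + y) z = f * pair x z + pair y z) &
          (forall x, (forall y, pair x y = 0) -> x = 0)],
      [/\ (forall f x y g, rho (f *: x + y) g = f * rho x g + rho y g) &
          (forall x, is_vector_field (rho x))],
      R_bilinear dorf,
      (forall f x, pair (D f) x = half * rho x f) &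
      [/\ forall x y z, dorf x (dorf y z) = dorf (dorf x y) z + dorf y (dorf x z),
          forall x y f, rho (dorf x y) f = rho x (rho y f) - rho y (rho x f),
          forall x y f, dorf x (f *: y) = rho x f *: y + f *: dorf x y
        & [/\ forall x y, dorf x y + dorf y x = 2%:R *: D (pair x y),
          forall f x, dorf (D f) x = 0
        & forall x y z, rho x (pair y z) = pair (dorf x y) z + pair y (dorf x z)]]].

Definition bundle_endo (P : V -> V) : Prop :=
  forall f x y, P (f *: x + y) = f *: P x + P y.

Definition almost_hypercomplex (pair : V -> V -> A) (I J K : V -> V) : Prop :=
  [/\ [/\ bundle_endo I, bundle_endo J & bundle_endo K],
      [/\ (forall x y, pair (I x) (I y) = pair x y),
          (forall x y, pair (J x) (J y) = pair x y) &
          (forall x y, pair (K x) (K y) = pair x y)] &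
      [/\ forall x, I (I x) = - x, forall x, J (J x) = - x,
          forall x, K (K x) = - x & forall x, I (J (K x)) = - x]].

Definition Delta (pair : V -> V -> A) (D : A -> V) (I J K : V -> V)
    (f : A) (X Y : V) : V :=
  pair X Y *: D f + pair (I X) Y *: I (D f) + pair (J X) Y *: J (D f)
  + pair (K X) Y *: K (D f).

Definition hypercomplex_connection (rho : V -> A -> A) (pair : V -> V -> A)
    (D : A -> V) (I J K : V -> V) (nabla : V -> V -> V) : Prop :=
  [/\ R_bilinear nabla,
      (forall f X Y, nabla (f *: X) Y = f *: nabla X Y) &
      (forall f X Y, nabla X (f *: Y) =
                     rho X f *: Y + f *: nabla X Y - Delta pair D I J K f X Y)].

Definition torsion (dorf : V -> V -> V) (nabla : V -> V -> V) (X Y : V) : V :=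
  nabla X Y - nabla Y X - courant_bracket dorf X Y.

Definition parallel (nabla : V -> V -> V) (P : V -> V) : Prop :=
  forall X Y, nabla X (P Y) - P (nabla X Y) = 0.

End Courant.

(* Main.v *)
Require Import Defs.
From HB Require Import structures.
From mathcomp Require Import all_boot all_order all_algebra.
Import Order.TTheory GRing.Theory Num.Theory.
Local Open Scope ring_scope.

Lemma endo_add {R : realFieldType} {A : comAlgType R} {V : lmodType A} {P : V -> V} :
  bundle_endo P -> forall x y, P (x + y) = P x + P y.
Proof. by move=> H x y; rewrite -[x in LHS]scale1r H scale1r. Qed.

Lemma endo_sub {R : realFieldType} {A : comAlgType R} {V : lmodType A} {P : V -> V} :
  bundle_endo P -> forall x y, P (x - y) = P x - P y.
Proof.
move=> H x y.
have P0 : P 0 = 0.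
  have := endo_add H 0 0; rewrite addr0 => /(congr1 (fun z => z - P 0)).
  by rewrite subrr addrK => <-.
have PN : P (- y) = - P y.
  have := endo_add H y (- y); rewrite subrr P0 => /(congr1 (fun z => - P y + z)).
  by rewrite addr0 addKr => <-.
by rewrite (endo_add H) PN.
Qed.

Lemma endo_neg {R : realFieldType} {A : comAlgType R} {V : lmodType A} {P : V -> V} :
  bundle_endo P -> forall x, P (- x) = - P x.
Proof.
move=> H x; have := endo_sub H 0 x; rewrite sub0r => ->.
have := endo_sub H 0 0; rewrite subrr => ->; by rewrite subrr sub0r.
Qed.

Lemma two_zero {R : realFieldType} {A : comAlgType R} {V : lmodType A} (s : V) :
  s = - s -> s = 0.
Proof.
move=> Hs.
have H2 : s + s = 0 by rewrite {2}Hs subrr.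
have E : ((2%:R : R)^-1)%:A * (2%:R : A) = 1.
  rewrite -(rmorph_nat (in_alg A)) -in_algE -rmorphM mulVf ?pnatr_eq0 //.
  exact: rmorph1.
have -> : s = 2^-1%:A *: (2%:R *: s) by rewrite scalerA E scale1r.
by rewrite scaler_nat (_ : s *+ 2 = 0) ?scaler0 // mulrSr mulr1n.
Qed.

Theorem mainTheorem6 (R : realFieldType) (A : comAlgType R) (V : lmodType A)
    (rho : V -> A -> A) (pair : V -> V -> A) (dorf : V -> V -> V) (D : A -> V)
    (I J K : V -> V)
    (HC : courant_algebroid rho pair dorf D)
    (HH : almost_hypercomplex pair I J K) :
  forall nabla1 nabla2 : V -> V -> V,
    (hypercomplex_connection rho pair D I J K nabla1 /\
     parallel nabla1 I /\ parallel nabla1 J /\ parallel nabla1 K /\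
     (forall X Y, torsion dorf nabla1 X Y =
        I (D (pair X (I Y))) + J (D (pair X (J Y))) + K (D (pair X (K Y))))) ->
    (hypercomplex_connection rho pair D I J K nabla2 /\
     parallel nabla2 I /\ parallel nabla2 J /\ parallel nabla2 K /\
     (forall X Y, torsion dorf nabla2 X Y =
        I (D (pair X (I Y))) + J (D (pair X (J Y))) + K (D (pair X (K Y))))) ->
    forall X Y, nabla1 X Y = nabla2 X Y.
Proof.
move=> n1 n2 [_ [pI1 [pJ1 [pK1 T1]]]] [_ [pI2 [pJ2 [pK2 T2]]]] X Y.
case: HH => [[eI eJ eK] _ [II JJ KK IJK]].
pose S X Y := n1 X Y - n2 X Y.
have comm : forall P, bundle_endo P -> parallel n1 P -> parallel n2 P ->
    forall X Y, S X (P Y) = P (S X Y).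
  move=> P eP p1 p2 X' Y'.
  by rewrite /S (endo_sub eP) (subr0_eq (p1 X' Y')) (subr0_eq (p2 X' Y')).
have sym : forall X Y, S X Y = S Y X.
  move=> X' Y'; have := T1 X' Y'; rewrite -T2 /torsion => /addIr/eqP.
  rewrite subr_eq => /eqP; rewrite /S => ->.
  by rewrite (addrC (n2 X' Y' - n2 Y' X')) -addrA addrAC subrr add0r.
have sq : forall P, bundle_endo P -> parallel n1 P -> parallel n2 P ->
    (forall x, P (P x) = - x) -> forall X Y, S (P X) (P Y) = - S X Y.
  move=> P eP p1 p2 PP X' Y'.
  by rewrite (comm P) // sym (comm P) // PP sym.
have neg2 : forall X Y, S X (- Y) = - S X Y.
  by move=> X' Y'; rewrite -II (comm I) // (comm I) // II.
have neg1 : forall X Y, S (- X) Y = - S X Y.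
  by move=> X' Y'; rewrite sym neg2 sym.
have KJI : forall x, K x = - J (I x).
  move=> x; have := congr1 J (congr1 I (IJK x)).
  by rewrite II (endo_neg eJ) (endo_neg eI) (endo_neg eJ) JJ opprK => ->.
have H : S X Y = - S X Y.
  rewrite -{1}(sq K eK pK1 pK2 KK) !KJI neg1 neg2 opprK.
  by rewrite (sq J eJ pJ1 pJ2 JJ) (sq I eI pI1 pI2 II) opprK.
by apply/eqP; rewrite -subr_eq0; apply/eqP; exact: two_zero H.
Qed.
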